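(* For all $n\ge 1$, $f(n)<2n$.
   Context: $\mathbb{N}=\{0,1,2,\dots\}$. The sequence $f:\mathbb{N}\to\mathbb{N}$ is defined greedily: $f(0)=0$, and for $n\ge1$, $f(n)$ is the least natural number such that (i) $f(n)\notin\{f(0),f(1),\dots,f(n-1)\}$ and (ii) $\sum_{1\le i\le n} f(i)$ is divisible by $n$. *)

(* Defs.v *)
From mathcomp Require Import all_boot.
Set Implicit Arguments. Unset Strict Implicit. Unset Printing Implicit Defensive.

Definition admissible (g : nat -> nat) (n m : nat) : Prop :=
  (forall i, i < n -> g i <> m) /\ n %| (\sum_(1 <= i < n) g i) + m.

Definition greedy_seq (g : nat -> nat) : Prop :=
  g 0 = 0 /\
  forall n, 1 <= n ->
    admissible g n (g n) /\ (forall m, admissible g n m -> g n <= m).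

(* Main.v *)
Require Import Defs.
From mathcomp Require Import all_boot.
From mathcomp Require Import zify.

Section S.
Variable f : nat -> nat.
Hypothesis hf : greedy_seq f.

Definition inv n := exists c, \sum_(1 <= i < n.+1) f i = n * c /\ c <= n /\
  forall i, i <= n -> f i <= c + n.

Lemma step_bound n c : \sum_(1 <= i < n.+1) f i = n * c -> c <= n ->
  (forall i, i <= n -> f i <= c + n) -> f n.+1 <= c + n.+1.
Proof.
move=> hS hc hi; have [_ hmin] := (proj2 hf) n.+1 erefl.
apply: hmin; split.
- move=> i hin heq; have := hi i; rewrite -ltnS => /(_ hin); lia.
- rewrite hS; apply/dvdnP; exists (c.+1); lia.
Qed.

Lemma inv_all n : inv n.
Proof.
elim: n => [|n [c [hS [hc hi]]]].
  exists 0; rewrite big_geq //; split => //; split => // i; rewrite leqn0 => /eqP ->.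
  by rewrite (proj1 hf).
have hb := @step_bound n c hS hc hi.
have [[_ hd] _] := (proj2 hf) n.+1 erefl.
rewrite hS in hd; case/dvdnP: hd => q hq.
have hq1 : q <= c.+1 by nia.
have hq2 : c <= q by nia.
exists q; rewrite big_nat_recr //= hS; split; first lia.
split; first lia.
move=> i; rewrite leq_eqVlt => /orP [/eqP -> | hin]; first nia.
have := hi i hin; lia.
Qed.

End S.

Theorem mainTheorem2 (f : nat -> nat) (hf : greedy_seq f) :
  forall n, 1 <= n -> f n < 2 * n.
Proof.
case=> [//|n] _.
have [c [hS [hc hi]]] := @inv_all f hf n.
have := @step_bound f hf n c hS hc hi; lia.
Qed.
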